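(* Let $q$ be a prime power, let $n\ge 2$ and $K\ge 1$ be fixed integers, and fix a receiver index $j\in\{1,\dots,n\}$. Let $\mathbf H[t_0],\mathbf H[t_1],\dots,\mathbf H[t_K]$ be independent random $n\times n$ matrices, each with entries drawn independently and uniformly from $\mathbb F_q\setminus\{0\}$. For each $s$ let $\mathbf h_j^{\mathrm{int}}[t_s]=(h_{j1}[t_s],\dots,h_{j\,j-1}[t_s],h_{j\,j+1}[t_s],\dots,h_{jn}[t_s])\in\mathbb F_q^{\,n-1}$ be the interference vector of receiver $j$ at time $t_s$. Then, conditional on the event that the vectors $\mathbf h_j^{\mathrm{int}}[t_0],\dots,\mathbf h_j^{\mathrm{int}}[t_K]$ are linearly dependent over $\mathbb F_q$, the probability that receiver $j$ can recover its message from $\mathbf H[t_0],\dots,\mathbf H[t_K]$ is $1-O(q^{-1})$ as $q\to\infty$.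
   Context: Receiver $j$ ''can recover its message from'' matrices $\mathbf M_0,\dots,\mathbf M_K\in\mathbb F_q^{n\times n}$ means: there exist scalars $\lambda_0,\dots,\lambda_K\in\mathbb F_q$ such that $\sum_{s=0}^K\lambda_s(\mathbf M_s)_{jj}\neq 0$ and $\sum_{s=0}^K\lambda_s(\mathbf M_s)_{ji}=0$ for every $i\neq j$ (equivalently $\sum_s \lambda_s\mathbf h_j^{\mathrm{int}}[t_s]=\mathbf 0$ while the corresponding combination of diagonal entries is nonzero). *)

(* Defs.v *)
From mathcomp Require Import all_boot all_order all_algebra.
Set Implicit Arguments. Unset Strict Implicit. Unset Printing Implicit Defensive.
Import Order.TTheory GRing.Theory Num.Theory.
Local Open Scope ring_scope.

Section Defs.
Variables (F : finFieldType) (n K : nat).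

Definition chan := {ffun 'I_K.+1 -> 'M[F]_n}.

(* Sample space: all entries of all matrices lie in F \ {0}.  Independent
   uniform entries = uniform distribution on this finite set. *)
Definition sample_space : {set chan} :=
  [set H : chan | [forall s, forall i, forall k, H s i k != 0]].

Definition h_int (j : 'I_n) (H : chan) (s : 'I_K.+1) : 'rV[F]_n.-1 :=
  col' j (row j (H s)).

Definition h_int_mx (j : 'I_n) (H : chan) : 'M[F]_(K.+1, n.-1) :=
  \matrix_(s < K.+1) h_int j H s.

Definition int_dependent (j : 'I_n) (H : chan) : bool :=
  ~~ row_free (h_int_mx j H).

Definition can_recover (j : 'I_n) (H : chan) : bool :=
  [exists lambda : {ffun 'I_K.+1 -> F},
    (\sum_(s < K.+1) lambda s * H s j j != 0) &&
    [forall i : 'I_n, (i != j) ==> (\sum_(s < K.+1) lambda s * H s j i == 0)]].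

Definition cond_prob_recover (j : 'I_n) : rat :=
  (#|[set H in sample_space | int_dependent j H && can_recover j H]|%:R /
   #|[set H in sample_space | int_dependent j H]|%:R).

End Defs.

(* Main.v *)
Require Import Defs.
From mathcomp Require Import all_boot all_order all_algebra.
Import Order.TTheory GRing.Theory Num.Theory.
From mathcomp Require Import zify.
Local Open Scope ring_scope.

Set Implicit Arguments. Unset Strict Implicit. Unset Printing Implicit Defensive.

Section Aux.
Variables (F : finFieldType) (n K : nat) (j : 'I_n).

Definition akey (M : 'M[F]_(K.+1, n.-1)) : 'rV[F]_K.+1 :=
  odflt 0 [pick a : 'rV[F]_K.+1 | (a != 0) && (a *m M == 0)].
Definition ikey (M : 'M[F]_(K.+1, n.-1)) : 'I_K.+1 :=
  odflt ord0 [pick i | akey M 0 i != 0].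

Definition upd (H : chan F n K) (i : 'I_K.+1) (c : F) : chan F n K :=
  [ffun s => if s == i then \matrix_(a, b) (if (a == j) && (b == j) then c else H s a b)
             else H s].

Lemma upd_int H i c : h_int_mx j (upd H i c) = h_int_mx j H.
Proof.
apply/matrixP => s k; rewrite /h_int_mx !mxE /h_int ffunE.
case: ifP => // _; rewrite mxE eqxx /=.
by rewrite eq_sym (negbTE (neq_lift j k)).
Qed.

Lemma akey_spec H : int_dependent j H ->
  (akey (h_int_mx j H) != 0) && (akey (h_int_mx j H) *m h_int_mx j H == 0).
Proof.
rewrite /int_dependent -kermx_eq0 => /matrix0Pn [r [k Hrk]].
rewrite /akey; case: pickP => [a -> //|/(_ (row r (kermx (h_int_mx j H))))].
rewrite -row_mul mulmx_ker row0 eqxx andbT => /negbFE /eqP Hr.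
by move: Hrk; have := congr1 (fun M : 'rV[F]_K.+1 => M 0 k) Hr; rewrite !mxE => ->; rewrite eqxx.
Qed.

Lemma ikey_spec H : int_dependent j H ->
  akey (h_int_mx j H) 0 (ikey (h_int_mx j H)) != 0.
Proof.
move=> /akey_spec /andP [/matrix0Pn [r [k Hk]] _].
rewrite /ikey; case: pickP => [i -> //|/(_ k)].
by rewrite (ord1 r) in Hk; rewrite Hk.
Qed.


Lemma mulM_entry H (a : 'rV[F]_K.+1) k :
  (a *m h_int_mx j H) 0 k = \sum_s a 0 s * H s j (lift j k).
Proof. by rewrite mxE; apply: eq_bigr => s _; rewrite !mxE. Qed.

Lemma bad_orth H : int_dependent j H -> ~~ can_recover j H ->
  \sum_s akey (h_int_mx j H) 0 s * H s j j = 0.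
Proof.
move=> dep; have /andP [_ /eqP aM] := akey_spec dep.
apply: contraNeq => Hd; apply/existsP; exists [ffun s => akey (h_int_mx j H) 0 s].
apply/andP; split.
  by under eq_bigr do rewrite ffunE.
apply/forallP => i; apply/implyP => ij.
case: (unliftP j i) ij => [k ->|->]; last by rewrite eqxx.
move=> _; under eq_bigr do rewrite ffunE.
by rewrite -mulM_entry aM mxE.
Qed.

Definition fmap (p : chan F n K * F) : chan F n K :=
  upd p.1 (ikey (h_int_mx j p.1)) p.2.

Definition Bset := [set H in sample_space F n K | int_dependent j H && ~~ can_recover j H].
Definition Dset := [set H in sample_space F n K | int_dependent j H].

Lemma fmap_inj : {in setX Bset [set c : F | c != 0] &, injective fmap}.
Proof.
move=> [H1 c1] [H2 c2]; rewrite !inE /= => /andP [/andP [_ /andP [d1 b1]] _].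
move=> /andP [/andP [_ /andP [d2 b2]] _]; rewrite /fmap /= => E.
have EM : h_int_mx j H1 = h_int_mx j H2 by rewrite -(upd_int H1 (ikey (h_int_mx j H1)) c1) E upd_int.
have o1 := bad_orth d1 b1; have o2 := bad_orth d2 b2.
have nz := ikey_spec d1.
rewrite -EM in E o2.
set i0 := ikey (h_int_mx j H1) in E nz.
set a := akey (h_int_mx j H1) in o1 o2 nz.
have Ec : c1 = c2.
  have := congr1 (fun H : chan F n K => H i0 j j) E; by rewrite /upd !ffunE eqxx !mxE eqxx.
subst c2; congr pair.
have Eo : forall s a' b', (s != i0) || (a' != j) || (b' != j) -> H1 s a' b' = H2 s a' b'.
  move=> s a' b' hs; have := congr1 (fun H : chan F n K => H s a' b') E.
  rewrite /upd !ffunE; case: eqP hs => [-> /= hab|//].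
  by rewrite !mxE; case: (a' =P j) hab => [-> /= hb|//]; rewrite (negbTE hb).
have Ed : H1 i0 j j = H2 i0 j j.
  move: o1 o2; rewrite (bigD1 i0) //= (bigD1 i0 (P:=predT)) //=.
  have -> : \sum_(s | s != i0) a 0 s * H1 s j j = \sum_(s | s != i0) a 0 s * H2 s j j.
    by apply: eq_bigr => s hs; rewrite Eo // hs.
  move=> o1 o2; apply: (mulfI nz); apply/eqP; rewrite -(subr_eq0); apply/eqP.
  by rewrite -(addrK (\sum_(s | s != i0) a 0 s * H2 s j j) (a 0 i0 * H1 i0 j j)) o1
     -{1}(addrK (\sum_(s | s != i0) a 0 s * H2 s j j) (a 0 i0 * H2 i0 j j)) o2 subrr.
apply/ffunP => s; apply/matrixP => a' b'.
case: (s =P i0) => [->|/eqP hs]; last by rewrite Eo // hs.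
case: (a' =P j) => [->|/eqP ha]; last by rewrite Eo // ha orbT.
case: (b' =P j) => [->|/eqP hb]; last by rewrite Eo // hb orbT.
exact: Ed.
Qed.


Lemma card_bound : (#|Bset| * #|F|.-1 <= #|Dset|)%N.
Proof.
have -> : #|F|.-1 = #|[set c : F | c != 0]|.
  by rewrite -(cardC1 (0 : F)); apply: eq_card => c; rewrite inE.
rewrite -cardsX -(card_in_imset fmap_inj); apply: subset_leq_card.
apply/subsetP => _ /imsetP [[H c] hin ->].
move: hin; rewrite !inE /= => /andP [/andP [hS /andP [dep _]] hc].
rewrite /int_dependent /fmap upd_int -/(int_dependent j H) dep andbT.
move/forallP: hS => hS.
apply/forallP => s; apply/forallP => a; apply/forallP => b.
rewrite /upd ffunE; case: ifP => _; last by move: (hS s) => /forallP /(_ a) /forallP /(_ b).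
rewrite mxE; case: ifP => _ //.
by move: (hS s) => /forallP /(_ a) /forallP /(_ b).
Qed.

Lemma Dset_nonempty : (1 <= K)%N -> (0 < #|Dset|)%N.
Proof.
move=> K1; apply/card_gt0P; exists [ffun _ => const_mx 1].
rewrite !inE; apply/andP; split.
  by apply/forallP => s; apply/forallP => a; apply/forallP => b; rewrite ffunE mxE oner_neq0.
rewrite /int_dependent -row_leq_rank -ltnNge.
have -> : h_int_mx j [ffun _ => const_mx 1] = (const_mx 1 : 'cV[F]_K.+1) *m (const_mx 1 : 'rV[F]_n.-1).
  apply/matrixP => s k; rewrite !mxE big_ord1 !mxE ffunE mxE mulr1 //.
apply: (leq_ltn_trans (mxrankM_maxl _ _)).
by apply: (leq_ltn_trans (rank_leq_col _)).
Qed.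

End Aux.

Theorem lemma3 (n K : nat) (j : 'I_n) :
  (2 <= n)%N -> (1 <= K)%N ->
  exists (C : rat) (q0 : nat),
    forall F : finFieldType, (q0 <= #|F|)%N ->
      `|cond_prob_recover F K j - 1| <= C / (#|F|%:R).
Proof.
move=> _ K1; exists 2%:R, 0%N => F _.
have hD := Dset_nonempty F j K1.
have hB := card_bound F K j.
have hq : (2 <= #|F|)%N.
  by rewrite (cardD1 (0 : F)) (cardD1 (1 : F)) !inE oner_neq0.
have hsplit : #|[set H in sample_space F n K | int_dependent j H && can_recover j H]|
   = (#|Dset F K j| - #|Bset F K j|)%N.
  rewrite -(cardsID [set H | can_recover j H] (Dset F K j)).
  have -> : Bset F K j = Dset F K j :\: [set H | can_recover j H].
    by apply/setP => H; rewrite !inE andbA andbC.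
  rewrite addnK; apply: eq_card => H; rewrite !inE andbA.
  by rewrite andbC.
have BD : (#|Bset F K j| <= #|Dset F K j|)%N.
  apply: subset_leq_card; apply/subsetP => H; rewrite !inE => /andP [-> /andP [-> _]] //.
rewrite /cond_prob_recover hsplit natrB // -/(Dset F K j).
set d := #|Dset F K j| in hD hB BD *; set b := #|Bset F K j| in hB BD *.
set q := #|F| in hq hB *.
have d0 : (d%:R : rat) != 0 by rewrite pnatr_eq0 -lt0n.
rewrite mulrBl divff // addrAC subrr add0r normrN.
rewrite ger0_norm ?divr_ge0 ?ler0n //.
have q0 : (0 : rat) < q%:R by rewrite ltr0n; apply: leq_trans hq.
have dp : (0 : rat) < d%:R by rewrite ltr0n.
rewrite ler_pdivrMr // mulrAC ler_pdivlMr //.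
have : (b * q <= 2 * d)%N.
  move: hB hq; nia.
by rewrite -natrM -[2]/(2%:R) -natrM ler_nat.
Qed.
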